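(* Let $X$ be a connected precolored graph and $Y$ any precolored graph. Then $A(\overline X*Y)=A(X*Y)$, i.e. the two quotients of $A(X_{N})$ ($N$ the number of vertices of $X*Y$) defined by $\overline X*Y$ and by $X*Y$ coincide (the identity on generators induces an isomorphism).
   Context: A precolored graph $X=(V,E)$ is a finite set $V$ with a family $E=\{E_1,\dots,E_p\}$ of disjoint subsets of $V\times V-\Delta_V$. Its completion $\overline X=(V,\overline E)$ is the colored graph with partition $\overline E=\{E_1,\dots,E_p,E_{p+1}\}$ of $V\times V-\Delta_V$, where $E_{p+1}$ is the set of remaining (missing) pairs. $X$ is connected if the oriented graph $(V,\bigcup_iE_i)$ is connected disregarding orientations. For a colored graph with partition $\{C_1,\dots,C_\ell\}$ on $N$ vertices, its Laplacian is $d_{xx}=0$, $d_{xy}=c(k)$ for $(x,y)\in C_k$ ($c$ injective into ${\mathbb C}$), and $A(\cdot)$ is the quotient of $A(X_N)$ (the universal C*-algebra generated by the entries of an $N\times N$ magic biunitary $w$, i.e. projections with rows and columns summing to $1$) by $wd=dw$; for a precolored graph $X$, $A(X):=A(\overline X)$. Free product (also for precolored graphs): for $X=(T,\{E_r\}_{r\le p})$, $Y=(Z,\{F_s\}_{s\le q})$, $X*Y=(T\times Z,\{E_r^\circ\}\cup\{F_s^\circ\})$ with $E_r^\circ=\{(i\alpha,j\alpha)\mid(i,j)\in E_r,\alpha\in Z\}$, $F_s^\circ=\{(i\alpha,j\beta)\mid i,j\in T,(\alpha,\beta)\in F_s\}$. *)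

(* Defs.v *)
From HB Require Import structures.
From mathcomp Require Import all_boot all_order all_algebra.
From mathcomp Require Import complex.
From mathcomp Require Import Rstruct.
Set Implicit Arguments. Unset Strict Implicit. Unset Printing Implicit Defensive.
Import Order.TTheory GRing.Theory Num.Theory.
Local Open Scope ring_scope.

Definition CC := (Rdefinitions.R)[i].
Definition modc (z : CC) : Rdefinitions.R := Normc.normc z.

Record cstar_structure (A : algType CC) := CStar {
  cstar : A -> A;
  cnorm : A -> Rdefinitions.R;
  cstarD : forall x y, cstar (x + y) = cstar x + cstar y;
  cstarZ : forall (a : CC) x, cstar (a *: x) = (a^*)%C *: cstar x;
  cstarM : forall x y, cstar (x * y) = cstar y * cstar x;
  cstarK : forall x, cstar (cstar x) = x;
  cnorm_ge0 : forall x, 0 <= cnorm x;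
  cnorm_eq0 : forall x, cnorm x = 0 -> x = 0;
  cnormD : forall x y, cnorm (x + y) <= cnorm x + cnorm y;
  cnormZ : forall (a : CC) x, cnorm (a *: x) = modc a * cnorm x;
  cnormM : forall x y, cnorm (x * y) <= cnorm x * cnorm y;
  cnorm_cstar : forall x, cnorm (cstar x * x) = cnorm x ^+ 2;
  cnorm_complete : forall u : nat -> A,
    (forall e : Rdefinitions.R, 0 < e ->
       exists N, forall m n, (N <= m)%N -> (N <= n)%N -> cnorm (u m - u n) < e) ->
    exists l : A, forall e : Rdefinitions.R, 0 < e ->
       exists N, forall n, (N <= n)%N -> cnorm (u n - l) < e
}.

Definition magic_biunitary (A : algType CC) (S : cstar_structure A) (V : finType)
  (w : V -> V -> A) : Prop :=
  [/\ forall i j, cstar S (w i j) = w i j,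
      forall i j, w i j * w i j = w i j,
      forall i, \sum_j w i j = 1
    & forall j, \sum_i w i j = 1].

(* A colored graph with l colors: col x y is the class C_k of (x,y) for     *)
(* x <> y (the value on the diagonal is irrelevant).                        *)
(* A precolored graph with p colors: pcol x y = Some r iff (x,y) is in E_r, *)
(* None iff (x,y) is in no E_r (value on the diagonal irrelevant, since     *)
(* the E_r are subsets of V x V minus the diagonal).                        *)
Definition colored (V : finType) (l : nat) := V -> V -> 'I_l.
Definition precolored (V : finType) (p : nat) := V -> V -> option 'I_p.

(* Completion: the missing pairs get the new color p+1 (index p). *)
Definition completion (V : finType) (p : nat) (X : precolored V p) : colored V p.+1 :=
  fun x y => match X x y with
             | Some r => widen_ord (leqnSn p) r
             | None => ord_max
             end.

Definition completion_pre (V : finType) (p : nat) (X : precolored V p)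
  : precolored V p.+1 := fun x y => Some (completion X x y).

Definition laplacian (V : finType) (l : nat) (X : colored V l) (c : 'I_l -> CC)
  : V -> V -> CC := fun x y => if x == y then 0 else c (X x y).

Definition commutes_with (A : algType CC) (V : finType) (w : V -> V -> A)
  (d : V -> V -> CC) : Prop :=
  forall i k, \sum_j w i j * (d j k *: 1) = \sum_j (d i j *: 1) * w j k.

Definition pedge (V : finType) (p : nat) (X : precolored V p) : rel V :=
  fun x y => ((x != y) && (X x y != None)) || ((y != x) && (X y x != None)).
Definition pconnected (V : finType) (p : nat) (X : precolored V p) : Prop :=
  forall x y : V, connect (pedge X) x y.

(* Free product of precolored graphs: vertex set T x Z, colors E_r^o        *)
(* (indices 0..p-1) followed by F_s^o (indices p..p+q-1).                   *)
Definition pfree (T Z : finType) (p q : nat) (X : precolored T p) (Y : precolored Z q)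
  : precolored (T * Z)%type (p + q) :=
  fun x y =>
    let: (i, a) := x in let: (j, b) := y in
    if a == b then omap (@lshift p q) (X i j)
    else omap (@rshift p q) (Y a b).

Definition rel_A (A : algType CC) (V : finType) (p : nat) (X : precolored V p)
  (c : 'I_p.+1 -> CC) (w : V -> V -> A) : Prop :=
  commutes_with w (laplacian (completion X) c).

(* Main.v *)
Require Import Defs.
From mathcomp Require Import all_boot all_order all_algebra all_field all_fingroup all_solvable.
From mathcomp Require Import complex Rstruct.
From mathcomp Require Import ring lra zify.
Import Order.TTheory GRing.Theory Num.Theory.
Local Open Scope ring_scope.
Set Implicit Arguments. Unset Strict Implicit. Unset Printing Implicit Defensive.

Lemma CC_prim_root_exists n : (n > 0)%N -> {z : CC | n.-primitive_root z}.
Proof.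
pose p : {poly CC} := 'X^n - 1; have [r Dp] := closed_field_poly_normal p.
move=> n_gt0; apply/sigW; rewrite (monicP _) ?monicXnsubC // scale1r in Dp.
have rn1: all n.-unity_root r by apply/allP=> z; rewrite -root_prod_XsubC -Dp.
have sz_r: (n < (size r).+1)%N.
  by rewrite -(size_prod_XsubC r id) -Dp size_XnsubC.
have [|z] := hasP (has_prim_root n_gt0 rn1 _ sz_r); last by exists z.
by rewrite -separable_prod_XsubC -Dp separable_Xn_sub_1 // pnatr_eq0 -lt0n.
Qed.

Lemma modc_ge0 z : 0 <= modc z.
Proof. by case: z => a b; rewrite /modc /= sqrtr_ge0. Qed.

Lemma modcM x y : modc (x * y) = modc x * modc y.
Proof. exact: Normc.normcM. Qed.

Lemma modc1 : modc 1 = 1.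
Proof. exact: Normc.normc1. Qed.

Lemma modc0 : modc 0 = 0.
Proof. exact: Normc.normc0. Qed.

Lemma modcX x n : modc (x ^+ n) = modc x ^+ n.
Proof. by elim: n => [|n IH]; rewrite ?expr0 ?modc1 // !exprS modcM IH. Qed.

Lemma modc_real (r : Rdefinitions.R) : 0 <= r -> modc (r%:C)%C = r.
Proof. by move=> r0; rewrite /modc /= expr0n /= addr0 sqrtr_sqr ger0_norm. Qed.

Lemma modcN x : modc (- x) = modc x.
Proof. exact: normcN. Qed.

Lemma modc_prim n z : (n > 0)%N -> n.-primitive_root z -> modc z = 1.
Proof.
move=> n0 pz; apply/eqP; rewrite -(pexpr_eq1 n0 (modc_ge0 z)) -modcX.
by rewrite (prim_expr_order pz) modc1.
Qed.

Lemma modc_nat k : modc (k%:R) = k%:R.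
Proof.
have -> : (k%:R : CC) = ((k%:R : Rdefinitions.R)%:C)%C by rewrite rmorph_nat.
by rewrite modc_real ?ler0n.
Qed.

Section CS.
Variables (A : algType CC) (S : cstar_structure A).
Local Notation st := (cstar S).
Local Notation nm := (cnorm S).

Lemma st0 : st 0 = 0.
Proof. by have := cstarZ S 0 0; rewrite conjc0 !scale0r. Qed.

Lemma stN x : st (- x) = - st x.
Proof. by rewrite -scaleN1r cstarZ rmorphN1 scaleN1r. Qed.

Lemma stB x y : st (x - y) = st x - st y.
Proof. by rewrite cstarD stN. Qed.

Lemma st1 : st 1 = 1.
Proof.
have h : st (st 1 * 1) = st 1 * st (st 1) by rewrite cstarM.
by rewrite mulr1 cstarK mulr1 in h.
Qed.

Lemma stMn x k : st (x *+ k) = st x *+ k.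
Proof. by rewrite -[x *+ k]scaler_nat -[st x *+ k]scaler_nat cstarZ conjc_nat. Qed.

Lemma nm0 : nm 0 = 0.
Proof. by have := cnormZ S 0 0; rewrite modc0 mul0r scale0r. Qed.

Lemma nmN x : nm (- x) = nm x.
Proof. by rewrite -scaleN1r cnormZ modcN modc1 mul1r. Qed.

Lemma nm_sum (I : Type) (r : seq I) (P : pred I) (F : I -> A) :
  nm (\sum_(i <- r | P i) F i) <= \sum_(i <- r | P i) nm (F i).
Proof.
apply: (big_ind2 (fun a b => nm a <= b)); first by rewrite nm0.
  by move=> x1 x2 y1 y2 h1 h2; apply: le_trans (cnormD _ _ _) (lerD h1 h2).
by [].
Qed.

Lemma nm_sum_le (I : Type) (r : seq I) (P : pred I) (F : I -> A) (G : I -> Rdefinitions.R) :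
  (forall i, P i -> nm (F i) <= G i) ->
  nm (\sum_(i <- r | P i) F i) <= \sum_(i <- r | P i) G i.
Proof.
move=> h; apply: (big_ind2 (fun a b => nm a <= b)); first by rewrite nm0.
  by move=> x1 x2 y1 y2 h1 h2; apply: le_trans (cnormD _ _ _) (lerD h1 h2).
exact: h.
Qed.

Lemma nm_st x : nm (st x) = nm x.
Proof.
have key : forall y, nm y <= nm (st y).
  move=> y; have := cnorm_cstar S y; rewrite expr2 => h.
  have [y0|y0] := eqVneq (nm y) 0; first by rewrite y0 cnorm_ge0.
  have ypos : 0 < nm y by rewrite lt0r y0 cnorm_ge0.
  rewrite -(ler_pM2r ypos) -h; exact: cnormM.
by apply/eqP; rewrite eq_le key -{2}(cstarK S x) key.
Qed.

Lemma nmX x n : nm (x ^+ n.+1) <= nm x ^+ n.+1.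
Proof.
elim: n => [|n IH]; first by rewrite !expr1.
rewrite exprS [nm x ^+ _]exprS; apply: le_trans (cnormM _ _ _) _.
by apply: ler_wpM2l; [exact: cnorm_ge0|exact: IH].
Qed.


Lemma nm_le1_sq x : nm (st x * x) <= 1 -> nm x <= 1.
Proof.
rewrite cnorm_cstar => h; have := cnorm_ge0 S x; nra.
Qed.

Lemma proj_nm e : st e = e -> e * e = e -> nm e <= 1.
Proof.
move=> se ee; apply: nm_le1_sq; rewrite se ee.
have := cnorm_cstar S e; rewrite se ee => h; have := cnorm_ge0 S e; nra.
Qed.

Section Core.
Variables e c : A.
Hypotheses (se : st e = e) (sc : st c = c) (ee : e * e = e) (ec : e * c = c) (ce : c * e = c).

Lemma mul2 (a b g d : CC) :
  (a *: e + b *: c) * (g *: e + d *: c) = (a * g) *: e + (a * d + b * g) *: c + (b * d) *: (c * c).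
Proof.
rewrite mulrDl !mulrDr -!scalerAl -!scalerAr !scalerA ee ec ce.
by rewrite scalerDl [b * g]mulrC !addrA.
Qed.

Lemma lin3 (a1 b1 g1 a2 b2 g2 : CC) (x y z : A) :
  (a1 *: x + b1 *: y + g1 *: z) + (a2 *: x + b2 *: y + g2 *: z) =
  (a1 + a2) *: x + (b1 + b2) *: y + (g1 + g2) *: z.
Proof. by rewrite !scalerDl addrACA [X in X + _ = _]addrACA. Qed.

End Core.

Section Core2.
Variables e c : A.
Hypotheses (se : st e = e) (sc : st c = c) (ee : e * e = e) (ec : e * c = c) (ce : c * e = c).
Hypotheses (hp : nm (e + c) <= 1) (hm : nm (e - c) <= 1).

Lemma nm_sq_le1 x : nm x <= 1 -> nm (x * x) <= 1.
Proof.
move=> h; apply: le_trans (cnormM _ _ _) _; apply: mulr_ile1 => //; exact: cnorm_ge0.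
Qed.

Lemma step1 z : modc z = 1 -> nm (e + z *: c) <= 1.
Proof.
case: z => a b hz.
have hab : a ^+ 2 + b ^+ 2 = 1.
  have := sqr_sqrtr (addr_ge0 (sqr_ge0 a) (sqr_ge0 b)).
  by rewrite /modc /= in hz; rewrite hz expr1n => <-.
have ha1 : 0 <= 1 + a by nra.
have ha2 : 0 <= 1 - a by nra.
apply: nm_le1_sq.
have E1 : st (e + (a +i* b)%C *: c) = e + (a -i* b)%C *: c.
  by rewrite cstarD cstarZ se sc.
rewrite E1.
have f1 : forall z, e + z *: c = 1 *: e + z *: c by move=> z; rewrite scale1r.
have f2 : e + c = 1 *: e + 1 *: c by rewrite !scale1r.
have f3 : e - c = 1 *: e + (-1) *: c by rewrite scale1r scaleN1r.
pose al : CC := ((1 + a) / 2)%:C%C.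
pose be : CC := ((1 - a) / 2)%:C%C.
have E2 : (e + (a -i* b)%C *: c) * (e + (a +i* b)%C *: c) =
          al *: ((e + c) * (e + c)) + be *: ((e - c) * (e - c)).
  rewrite f1 [X in _ * X = _]f1 f2 f3 !mul2 // !scalerDr !scalerA lin3.
  congr (_ *: _ + _ *: _ + _ *: _); apply/eqP; rewrite eq_complex /=; apply/andP; split; apply/eqP; 
   rewrite /al /be /=; try field; nra.
rewrite E2; apply: le_trans (cnormD _ _ _) _.
rewrite !cnormZ !modc_real ?divr_ge0 //.
have h1 := nm_sq_le1 hp; have h2 := nm_sq_le1 hm.
nra.
Qed.


Lemma idemX n : e ^+ n.+1 = e.
Proof. by elim: n => [|n IH]; rewrite ?expr1 // exprS IH ee. Qed.

Lemma powE u n : (e + u *: c) ^+ n.+1 = e * \sum_(i < n.+2) (u ^+ i *: c ^+ i) *+ 'C(n.+1, i).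
Proof.
have -> : e + u *: c = e * (u *: c + 1) by rewrite mulrDr mulr1 -scalerAr ec addrC.
have cm : GRing.comm e (u *: c + 1).
  by rewrite /GRing.comm mulrDr mulrDl mulr1 mul1r -scalerAr -scalerAl ec ce.
rewrite exprMn_comm // idemX exprD1n; congr (_ * _); apply: eq_bigr => i _.
by rewrite exprZn.
Qed.

End Core2.

Lemma sum_root (om : CC) N m : (0 < N)%N -> N.-primitive_root om ->
  \sum_(k < N) (om ^+ m) ^+ k = if (N %| m)%N then N%:R else 0.
Proof.
move=> N0 pom; case: ifP => h.
  move: h; rewrite (prim_order_dvd pom) => /eqP ->.
  by rewrite (eq_bigr (fun _ => 1)) ?sumr_const ?card_ord // => i _; rewrite expr1n.
have u1 : om ^+ m != 1 by rewrite -(prim_order_dvd pom) h.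
have uN : (om ^+ m) ^+ N = 1 by rewrite exprAC (prim_expr_order pom) expr1n.
have := subrX1 (om ^+ m) N; rewrite uN subrr => /esym/eqP; rewrite mulf_eq0 subr_eq0 (negbTE u1) /=.
by move/eqP.
Qed.

Lemma dvd_lem n i : (i <= n.+1)%N -> (n.+2 %| n.+1 + i)%N = (i == 1)%N.
Proof.
case: i => [|i] hi.
  rewrite addn0; apply/negP => h; have := dvdn_leq (ltn0Sn n) h; lia.
rewrite addnS -addSn dvdn_addr //.
case: i hi => [|i] hi; first by rewrite dvdn0.
apply/negP => h; have := dvdn_leq (ltn0Sn i) h; move: hi; lia.
Qed.

Section Core3.
Variables e c : A.
Hypotheses (se : st e = e) (sc : st c = c) (ee : e * e = e) (ec : e * c = c) (ce : c * e = c).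
Hypotheses (hp : nm (e + c) <= 1) (hm : nm (e - c) <= 1).

Lemma step2 m : (m.+1)%:R * nm c <= 1.
Proof.
have [om pom] := CC_prim_root_exists (n := m.+2) isT.
have mo := modc_prim (ltn0Sn _) pom.
pose W := \sum_(k < m.+2) (om ^+ (k * m.+1)) *: (e + om ^+ k *: c) ^+ m.+1.
have HN : nm W <= (m.+2)%:R.
  have h0 : forall k : 'I_m.+2, true -> nm ((om ^+ (k * m.+1)) *: (e + om ^+ k *: c) ^+ m.+1) <= 1.
    move=> k _; rewrite cnormZ modcX mo expr1n mul1r.
    apply: le_trans (nmX _ _) _; apply: exprn_ile1; first exact: cnorm_ge0.
    by apply: step1 => //; rewrite modcX mo expr1n.
  rewrite /W; apply: le_trans (nm_sum_le _ h0) _.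
  by rewrite sumr_const card_ord.
have HW : W = (m.+2 * m.+1)%:R *: c.
  rewrite /W.
  have hex : forall (k : 'I_m.+2) (i : 'I_m.+2), om ^+ (k * m.+1) * om ^+ k ^+ i = (om ^+ (m.+1 + i)) ^+ k.
    by move=> k i; rewrite -!exprM -exprD; congr (_ ^+ _); ring.
  under eq_bigr do rewrite (powE ee ec ce) scalerAr scaler_sumr.
  rewrite -mulr_sumr exchange_big /=.
  under eq_bigr => i _.
    under eq_bigr => k _ do rewrite scalerMnr scalerA (hex k i).
    rewrite -scaler_suml sum_root //.
    over.
  rewrite /= (bigD1 (Ordinal (isT : (1 < m.+2)%N))) //= dvd_lem // eqxx big1 ?addr0.
    by rewrite expr1 bin1 -scalerAr mulrnAr ec natrM -scalerA [_%:R *: c]scaler_nat.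
  move=> i /eqP hi; rewrite dvd_lem; last by rewrite -ltnS.
  have -> : (i == 1 :> nat) = false by apply/eqP => h; apply: hi; apply: val_inj.
  by rewrite scale0r.
rewrite HW cnormZ modc_nat natrM in HN.
have N0 : (0 : Rdefinitions.R) < (m.+2)%:R by rewrite ltr0n.
have := cnorm_ge0 S c; nra.
Qed.

Lemma core : c = 0.
Proof.
apply: (@cnorm_eq0 _ S); have n0 := cnorm_ge0 S c.
apply/eqP; rewrite eq_le n0 andbT leNgt; apply/negP => c0.
have ci : 0 < (nm c)^-1 by rewrite invr_gt0.
have hb := archi_boundP (ltW ci).
set k := Num.Def.archi_bound _ in hb.
have h := step2 k.
have hi : (nm c)^-1 * nm c = 1 by rewrite mulVf // gt_eqF.
have hk : (k.+1%:R : Rdefinitions.R) = k%:R + 1 by rewrite -natr1.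
rewrite hk in h; nra.
Qed.

End Core3.

Lemma nm1 : nm 1 <= 1.
Proof. by apply: proj_nm; rewrite ?st1 ?mulr1. Qed.

Lemma nm_MnE y k : nm (y *+ k) = k%:R * nm y.
Proof. by rewrite -[y *+ _]scaler_nat cnormZ modc_nat. Qed.

Lemma invMnK (y : A) k : (k.+1%:R : CC)^-1 *: (y *+ k.+1) = y.
Proof. by rewrite -[y *+ _]scaler_nat scalerA mulVf ?scale1r // pnatr_eq0. Qed.

Lemma refl_le1 Q : st Q = Q -> Q * Q = Q -> nm (1 - Q *+ 2) <= 1.
Proof.
move=> sQ iQ; apply: nm_le1_sq; rewrite stB st1 stMn sQ.
have yy : Q *+ 2 * (Q *+ 2) = Q *+ 2 + Q *+ 2 by rewrite mulrnAl mulrnAr iQ -mulrnA -mulrnDr.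
rewrite mulrBl mul1r mulrBr mulr1 yy.
rewrite opprB addrK subrK; exact: nm1.
Qed.

Lemma orth (J : finType) (P : J -> A) : (forall j, st (P j) = P j) ->
  (forall j, P j * P j = P j) -> \sum_j P j = 1 -> forall a b, a != b -> P a * P b = 0.
Proof.
move=> sP iP sum1 a b ab.
set e := P a.
have se : st e = e by exact: sP.
have ee : e * e = e by exact: iP.
have ne : nm e <= 1 by exact: proj_nm.
pose x j := e * P j * e.
have sx : \sum_j x j = e by rewrite /x -mulr_suml -mulr_sumr sum1 mulr1 ee.
have xa : x a = e by rewrite /x ee ee.
rewrite (bigD1 a) //= (bigD1 b) /= in sx; last by rewrite eq_sym.
rewrite xa -[RHS]addr0 in sx; move/addrI: sx => sx.
pose K := [pred j | (j != a) && (j != b)].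
have hK : x b = - \sum_(j in K) x j.
  apply/eqP; rewrite -addr_eq0; apply/eqP; rewrite -[RHS]sx; congr (_ + _).
pose k := #|K|.
have hxj : forall j, nm (e - x j *+ 2) <= 1.
  move=> j; have -> : e - x j *+ 2 = e * (1 - P j *+ 2) * e.
    by rewrite mulrBr mulr1 mulrBl ee mulrnAr mulrnAl.
  apply: le_trans (cnormM _ _ _) _; apply: mulr_ile1; rewrite ?cnorm_ge0 //.
  apply: le_trans (cnormM _ _ _) _; apply: mulr_ile1; rewrite ?cnorm_ge0 //.
  exact: refl_le1.
pose s := \sum_(j in K) (e - x j *+ 2).
have hs : s = e *+ k + x b *+ 2.
  by rewrite /s sumrB sumr_const sumrMnl -[\sum_(j in K) x j]opprK -hK mulNrn opprK.
have hns : nm s <= k%:R.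
  have h0 : forall j, j \in K -> nm (e - x j *+ 2) <= 1 by move=> j _; exact: hxj.
  apply: le_trans (nm_sum_le _ h0) _.
  by rewrite sumr_const.
pose c := (k.+1%:R : CC)^-1 *: (x b *+ 2).
have E1 : e + c = (k.+1%:R : CC)^-1 *: (e + s).
  by rewrite hs addrA -mulrS scalerDr invMnK.
have E2 : e - c = (k.+1%:R : CC)^-1 *: ((e - x b *+ 2) + e *+ k).
  by rewrite addrAC -mulrS scalerDr invMnK scalerN.
have mi : modc ((k.+1%:R : CC)^-1) = (k.+1%:R)^-1.
  by rewrite /modc Normc.normcV; congr (_^-1); exact: modc_nat.
have kp : (0 : Rdefinitions.R) < k.+1%:R by rewrite ltr0n.
have hinv : (0 : Rdefinitions.R) < (k.+1%:R)^-1 by rewrite invr_gt0.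
have hi : ((k.+1%:R : Rdefinitions.R)^-1) * (k%:R + 1) = 1 by rewrite natr1 mulVf // pnatr_eq0.
have k0 : (0 : Rdefinitions.R) <= k%:R by rewrite ler0n.
have hk : (k.+1%:R : Rdefinitions.R) = k%:R + 1 by rewrite -natr1.
rewrite hk in hinv hi.
have hp : nm (e + c) <= 1.
  rewrite E1 cnormZ mi hk.
  have ht : nm (e + s) <= k%:R + 1.
    apply: le_trans (cnormD _ _ _) _; rewrite addrC; exact: lerD.
  have := cnorm_ge0 S (e + s); nra.
have hm : nm (e - c) <= 1.
  rewrite E2 cnormZ mi hk.
  have ht : nm ((e - x b *+ 2) + e *+ k) <= k%:R + 1.
    apply: le_trans (cnormD _ _ _) _; rewrite addrC; apply: lerD => //.
    rewrite nm_MnE; have := cnorm_ge0 S e; nra.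
  have := cnorm_ge0 S ((e - x b *+ 2) + e *+ k); nra.
have ec : e * c = c by rewrite /c -scalerAr mulrnAr /x !mulrA ee.
have ce : c * e = c by rewrite /c -scalerAl mulrnAl /x -!mulrA ee.
have sc : st c = c.
  by rewrite /c cstarZ conjc_inv conjc_nat stMn /x !cstarM se sP mulrA.
have c0 := core se sc ee ec ce hp hm.
have xb0 : x b = 0.
  move: c0; rewrite /c -[x b *+ 2]scaler_nat scalerA => /eqP.
  rewrite scaler_eq0 mulf_eq0 invr_eq0 !pnatr_eq0 /=; by move/eqP.
have hb0 : P b * e = 0.
  apply: (@cnorm_eq0 _ S); have := cnorm_cstar S (P b * e).
  rewrite cstarM sP se -mulrA [P b * (P b * e)]mulrA iP mulrA -/(x b) xb0 nm0 => /esym/eqP.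
  by rewrite sqrf_eq0 => /eqP.
have := cstarM S (P b) (P a); rewrite -/e hb0 st0 se sP => h; by rewrite h.
Qed.
End CS.

Inductive reach {X : Type} (E : X -> X -> Prop) (x : X) : X -> Prop :=
| reach_refl : reach E x x
| reach_step y z : reach E x y -> E y z -> reach E x z.

Section Graph.
Variables (A : algType CC) (S : cstar_structure A) (V : finType) (w : V -> V -> A).
Hypothesis mb : magic_biunitary S w.
Local Notation st := (cstar S).

Lemma w_sa i j : st (w i j) = w i j. Proof. by case: mb. Qed.
Lemma w_idem i j : w i j * w i j = w i j. Proof. by case: mb. Qed.
Lemma w_row i : \sum_j w i j = 1. Proof. by case: mb. Qed.
Lemma w_col j : \sum_i w i j = 1. Proof. by case: mb. Qed.

Lemma row_orth i j j' : j != j' -> w i j * w i j' = 0.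
Proof. move=> h; exact: (orth (w_sa i) (w_idem i) (w_row i) h). Qed.

Lemma col_orth i i' j : i != i' -> w i j * w i' j = 0.
Proof. move=> h; exact: (orth (fun k => w_sa k j) (fun k => w_idem k j) (w_col j) h). Qed.

Definition Pres (R : V -> V -> Prop) :=
  forall x v u y, (R x u /\ ~ R v y) \/ (~ R x u /\ R v y) -> w x v * w u y = 0.

Lemma pres_ext (R R' : V -> V -> Prop) : (forall a b, R a b <-> R' a b) -> Pres R -> Pres R'.
Proof.
move=> e h x v u y H; apply: h; rewrite !e; exact: H.
Qed.

Lemma pres_or R1 R2 : Pres R1 -> Pres R2 -> Pres (fun a b => R1 a b \/ R2 a b).
Proof.
move=> h1 h2 x v u y [[[r|r] nr]|[nr [r|r]]].
- by apply: h1; left; split => // ?; apply: nr; left.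
- by apply: h2; left; split => // ?; apply: nr; right.
- by apply: h1; right; split => // ?; apply: nr; left.
- by apply: h2; right; split => // ?; apply: nr; right.
Qed.

Lemma pres_T R : Pres R -> Pres (fun a b => R b a).
Proof.
move=> h x v u y H.
have : w u y * w x v = 0 by apply: h; case: H => [[? ?]|[? ?]]; [left|right].
move=> /(congr1 st); rewrite cstarM !w_sa st0 => ->; by [].
Qed.

Lemma pres_reach E : Pres E -> Pres (reach E).
Proof.
move=> hE.
have PA : forall x u, reach E x u -> forall v y, ~ reach E v y -> w x v * w u y = 0.
  move=> x u; elim => [|z u' _ IH Ezu] v y nr.
    apply: row_orth; apply/eqP => vy; apply: nr; rewrite vy; exact: reach_refl.
  rewrite -[w x v]mulr1 -(w_row z) mulr_sumr mulr_suml big1 // => t _.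
  have [rt|nrt] := Classical_Prop.classic (reach E v t).
    rewrite -mulrA; have -> : w z t * w u' y = 0; last by rewrite mulr0.
    apply: hE; left; split => // Ety; apply: nr; exact: reach_step rt Ety.
  by rewrite (IH v t nrt) mul0r.
have PB : forall v y, reach E v y -> forall x u, ~ reach E x u -> w x v * w u y = 0.
  move=> v y; elim => [|t y' _ IH Ety] x u nr.
    apply: col_orth; apply/eqP => xu; apply: nr; rewrite xu; exact: reach_refl.
  rewrite -[w x v]mulr1 -(w_col t) mulr_sumr mulr_suml big1 // => z _.
  have [rz|nrz] := Classical_Prop.classic (reach E x z).
    rewrite -mulrA; have -> : w z t * w u y' = 0; last by rewrite mulr0.
    apply: hE; right; split => // Ezu; apply: nr; exact: reach_step rz Ezu.
  by rewrite (IH x z nrz) mul0r.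
move=> x v u y [[r nr]|[nr r]]; [exact: PA | exact: PB].
Qed.


Definition Kpp (L : nat) (col : V -> V -> 'I_L) :=
  forall x v u y, v != y -> x != u -> col v y != col x u -> w x v * w u y = 0.

Lemma comm_K L (col : V -> V -> 'I_L) (c : 'I_L -> CC) : injective c ->
  commutes_with w (laplacian col c) <-> Kpp col.
Proof.
move=> ic; set d := laplacian col c.
have sL : forall i k, \sum_j w i j * (d j k *: 1) = \sum_j d j k *: w i j.
  by move=> i k; apply: eq_bigr => j _; rewrite -scalerAr mulr1.
have sR : forall i k, \sum_j (d i j *: 1) * w j k = \sum_j d i j *: w j k.
  by move=> i k; apply: eq_bigr => j _; rewrite -scalerAl mul1r.
split.
  move=> H x v u y vy xu cne.
  have h := H x y; rewrite sL sR in h.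
  have L1 : w x v * (\sum_j d j y *: w x j) * w u y = d v y *: (w x v * w u y).
    rewrite mulr_sumr (bigD1 v) //= big1 ?addr0.
      by rewrite -scalerAr w_idem -scalerAl.
    by move=> j jv; rewrite -scalerAr row_orth ?scaler0 // eq_sym.
  have R1 : w x v * (\sum_j d x j *: w j y) * w u y = d x u *: (w x v * w u y).
    rewrite -mulrA mulr_suml (bigD1 u) //= big1 ?addr0.
      by rewrite -scalerAl w_idem -scalerAr.
    by move=> j ju; rewrite -scalerAl col_orth ?scaler0 // mulr0.
  have : (d v y - d x u) *: (w x v * w u y) = 0 by rewrite scalerBl -L1 -R1 h subrr.
  move/eqP; rewrite scaler_eq0 subr_eq0 /d /laplacian (negbTE vy) (negbTE xu).
  have -> : (c (col v y) == c (col x u)) = false.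
    by apply/negP => /eqP /ic /eqP; apply/negP.
  by move/eqP.
move=> K i k; rewrite sL sR.
have e1 : \sum_j d j k *: w i j = \sum_j \sum_u d j k *: (w i j * w u k).
  by apply: eq_bigr => j _; rewrite -scaler_sumr -mulr_sumr w_col mulr1.
have e2 : \sum_u d i u *: w u k = \sum_j \sum_u d i u *: (w i j * w u k).
  rewrite exchange_big; apply: eq_bigr => u _.
  by rewrite -scaler_sumr -mulr_suml w_row mul1r.
rewrite e1 e2; apply: eq_bigr => j _; apply: eq_bigr => u _.
have [->//|dne] := eqVneq (d j k) (d i u).
suff -> : w i j * w u k = 0 by rewrite !scaler0.
move: dne; rewrite /d /laplacian.
have [jk|jk] := eqVneq j k; have [iu|iu] := eqVneq i u.
- by rewrite eqxx.
- by move=> _; rewrite jk; exact: col_orth.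
- by move=> _; rewrite iu; exact: row_orth.
- move=> hne; apply: K => //; apply/eqP => ce; move: hne; by rewrite ce eqxx.
Qed.

End Graph.

Lemma reach_cons {Xt : Type} (E : Xt -> Xt -> Prop) x y z : E x y -> reach E y z -> reach E x z.
Proof.
move=> Exy; elim => [|t z' _ IH Etz]; first by apply: reach_step (reach_refl _ _) Exy.
exact: reach_step IH Etz.
Qed.

Section Final.
Variables (T Z : finType) (p q : nat) (X : precolored T p) (Y : precolored Z q).

Local Notation col1 := (completion (pfree (completion_pre X) Y)).
Local Notation col2 := (completion (pfree X Y)).

Lemma val_col1 (a b : T * Z) : val (col1 a b) =
  if a.2 == b.2 then (if X a.1 b.1 is Some r then val r else p)
  else (if Y a.2 b.2 is Some s then p.+1 + s else p.+1 + q)%N.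
Proof.
case: a b => [i al] [j be] /=; rewrite /completion /pfree /completion_pre /=.
case: eqP => _ /=; first by rewrite /completion; case: (X i j).
by case: (Y al be).
Qed.

Lemma val_col2 (a b : T * Z) : val (col2 a b) =
  if a.2 == b.2 then (if X a.1 b.1 is Some r then val r else p + q)%N
  else (if Y a.2 b.2 is Some s then p + s else p + q)%N.
Proof.
case: a b => [i al] [j be] /=; rewrite /completion /pfree /=.
case: eqP => _ /=; first by case: (X i j).
by case: (Y al be).
Qed.

Lemma refine12 a b a' b' : col1 a b = col1 a' b' -> col2 a b = col2 a' b'.
Proof.
move/(congr1 val); rewrite !val_col1 => h; apply: val_inj; rewrite !val_col2; move: h.
case: (a.2 == b.2); case: (a'.2 == b'.2);
  do ?[case: (X _ _) => [[? ?]|] | case: (Y _ _) => [[? ?]|]]; rewrite /=; lia.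
Qed.

Lemma refine21 a b a' b' : col2 a b = col2 a' b' -> (a.2 == b.2) = (a'.2 == b'.2) ->
  col1 a b = col1 a' b'.
Proof.
move/(congr1 val); rewrite !val_col2 => h hs; apply: val_inj; rewrite !val_col1; move: h.
rewrite hs; case: (a'.2 == b'.2);
  do ?[case: (X _ _) => [[? ?]|] | case: (Y _ _) => [[? ?]|]]; rewrite /=; lia.
Qed.

Lemma lt_col2 a b : (val (col2 a b) < p)%N = (a.2 == b.2) && (X a.1 b.1 != None).
Proof.
rewrite val_col2; case: (a.2 == b.2) => /=.
  case: (X _ _) => [[r hr]|] /=; [by rewrite hr | lia].
case: (Y _ _) => [[r hr]|] /=; lia.
Qed.

End Final.

Theorem proposition7p1 (T Z : finType) (p q : nat)
  (X : precolored T p) (Y : precolored Z q)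
  (c1 : 'I_(p.+1 + q).+1 -> CC) (c2 : 'I_(p + q).+1 -> CC) :
  pconnected X -> injective c1 -> injective c2 ->
  forall (A : algType CC) (S : cstar_structure A)
         (w : (T * Z)%type -> (T * Z)%type -> A),
  magic_biunitary S w ->
  (rel_A (pfree (completion_pre X) Y) c1 w <-> rel_A (pfree X Y) c2 w).
Proof.
move=> hX ic1 ic2 A S w mb; rewrite /rel_A.
apply: (iff_trans (comm_K mb _ ic1)); apply: iff_sym; apply: (iff_trans (comm_K mb _ ic2)).
split; last first.
  move=> K1 x v u y vy xu cne; apply: K1 => //; apply: contra cne => /eqP e1.
  by apply/eqP; exact: refine12 e1.
move=> K2.
pose D := fun a b : T * Z => (a != b) && (val (completion (pfree X Y) a b) < p)%N.
have pD : Pres w D.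
  move=> x v u y [[Dxu nDvy]|[nDxu Dvy]].
    have /andP [xu lxu] := Dxu.
    have [vy|vy] := eqVneq v y; first by rewrite vy; exact: (col_orth mb).
    apply: K2 => //; apply/eqP => ce; apply: nDvy; by rewrite /D vy ce lxu.
  have /andP [vy lvy] := Dvy.
  have [xu|xu] := eqVneq x u; first by rewrite xu; exact: (row_orth mb).
  apply: K2 => //; apply/eqP => ce; apply: nDxu; by rewrite /D xu -ce lvy.
pose E := fun a b => D a b \/ D b a.
have pE : Pres w E by apply: pres_or pD (pres_T mb pD).
have pS : Pres w (fun a b => a.2 = b.2).
  apply: (pres_ext _ (pres_reach mb pE)) => a b; split.
    elim => [//| t z _ IH [Dtz|Dzt]].
      move: Dtz; rewrite /D lt_col2 => /andP [_ /andP [/eqP h _]]; by rewrite IH.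
    move: Dzt; rewrite /D lt_col2 => /andP [_ /andP [/eqP h _]]; by rewrite IH.
  case: a b => [i al] [j be] /= <-.
  have := hX i j; case/connectP => s.
  elim: s i => [|k s IHs] i /=; first by move=> _ ->; exact: reach_refl.
  case/andP => hik hpath hlast; apply: (reach_cons (y := (k, al))); last exact: IHs.
  move: hik; rewrite /pedge => /orP [/andP [ik xik]|/andP [ki xki]].
    left; rewrite /D lt_col2 /= eqxx xik /= andbT; apply/negP => /eqP [e].
    by rewrite e eqxx in ik.
  right; rewrite /D lt_col2 /= eqxx xki /= andbT; apply/negP => /eqP [e].
  by rewrite e eqxx in ki.
move=> x v u y vy xu cne.
have [e2|ne2] := eqVneq (completion (pfree X Y) v y) (completion (pfree X Y) x u); last exact: K2.
apply: pS.
have [h1|h1] := eqVneq v.2 y.2; have [h2|h2] := eqVneq x.2 u.2.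
- exfalso; apply: (negP cne); apply/eqP; apply: refine21 e2 _; by rewrite h1 h2 !eqxx.
- by right; split => // /eqP; rewrite (negbTE h2).
- by left; split => // /eqP; rewrite (negbTE h1).
- exfalso; apply: (negP cne); apply/eqP; apply: refine21 e2 _; by rewrite (negbTE h1) (negbTE h2).
Qed.
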